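(* Let $R$ be a ring all of whose idempotents are central, let $I$ be an ideal of $R$, and suppose $R$ is weakly $I$-clean. Let $n\ge 1$ and let $S=\{[a_{ij}]\in T_n(R)\mid a_{ii}=a_{jj}\text{ for all }i,j\}$. Then $I'=\{[a_{ij}]\in S\mid a_{11}\in I\}$ is an ideal of $S$, the idempotents of $S$ are exactly the matrices $eI_n$ with $e\in Idem(R)$, and $S$ is weakly $I'$-clean.
   Context: All rings are associative with identity; $Idem(R)$ is the set of idempotents of $R$. $T_n(R)$ is the ring of $n\times n$ upper triangular matrices over $R$ with the usual operations, and $I_n$ is the identity matrix. For an ideal $I$ of $R$, $R$ is weakly $I$-clean if for every $x\in R$ there is $e\in Idem(R)$ such that $x-e\in I$ or $x+e\in I$. *)

(* Defs.v *)
From HB Require Import structures.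
From mathcomp Require Import all_boot all_order all_algebra.
Set Implicit Arguments. Unset Strict Implicit. Unset Printing Implicit Defensive.
Import GRing.Theory.
Local Open Scope ring_scope.

Definition idem (R : pzRingType) (x : R) : Prop := x * x = x.

Definition idem_central (R : pzRingType) : Prop :=
  forall e : R, idem e -> forall r : R, e * r = r * e.

Definition is_ideal (R : pzRingType) (I : R -> Prop) : Prop :=
  [/\ I 0, (forall x y, I x -> I y -> I (x - y)),
      (forall r x, I x -> I (r * x)) & (forall r x, I x -> I (x * r))].

Definition weakly_clean (R : pzRingType) (I : R -> Prop) : Prop :=
  forall x : R, exists e : R, idem e /\ (I (x - e) \/ I (x + e)).

Definition Smat (R : pzRingType) (n : nat) (A : 'M[R]_n) : Prop :=
  (forall i j : 'I_n, (j < i)%N -> A i j = 0) /\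
  (forall i j : 'I_n, A i i = A j j).

(* I' = { A in S | a_11 in I }, where the first index is i0 *)
Definition Iprime (R : pzRingType) (I : R -> Prop) (n : nat) (i0 : 'I_n)
  (A : 'M[R]_n) : Prop := Smat A /\ I (A i0 i0).

Definition idemS (R : pzRingType) (n : nat) (A : 'M[R]_n) : Prop :=
  Smat A /\ A *m A = A.

Definition is_ideal_of_S (R : pzRingType) (n : nat) (J : 'M[R]_n -> Prop) : Prop :=
  [/\ (forall A, J A -> Smat A), J 0,
      (forall A B, J A -> J B -> J (A - B)),
      (forall X A, Smat X -> J A -> J (X *m A)) &
      (forall X A, Smat X -> J A -> J (A *m X))].

Definition weakly_clean_S (R : pzRingType) (n : nat) (J : 'M[R]_n -> Prop) : Prop :=
  forall X, Smat X -> exists E, idemS E /\ (J (X - E) \/ J (X + E)).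

(* Main.v *)
Require Import Defs.
From HB Require Import structures.
From mathcomp Require Import all_boot all_order all_algebra.
Import GRing.Theory.
Local Open Scope ring_scope.

Lemma diag_mul (R : pzRingType) n (A B : 'M[R]_n) (i : 'I_n) :
  (forall i j : 'I_n, (j < i)%N -> A i j = 0) ->
  (forall i j : 'I_n, (j < i)%N -> B i j = 0) ->
  (A *m B) i i = A i i * B i i.
Proof.
move=> HA HB; rewrite !mxE (bigD1 i) //= big1 ?addr0 // => k hk.
case: (ltngtP k i) => h.
- by rewrite (HA i k h) mul0r.
- by rewrite (HB k i h) mulr0.
- by move: hk; rewrite (ord_inj h) eqxx.
Qed.

Lemma Smat_mul (R : pzRingType) n (A B : 'M[R]_n) :
  Smat A -> Smat B -> Smat (A *m B).
Proof.
move=> [HA DA] [HB DB]; split.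
- move=> i j hji; rewrite !mxE big1 // => k _.
  case: (ltnP k i) => h.
  + by rewrite (HA i k h) mul0r.
  + by rewrite (HB k j (leq_trans hji h)) mulr0.
- by move=> i j; rewrite !diag_mul // (DA i j) (DB i j).
Qed.

Lemma Smat_sub (R : pzRingType) n (A B : 'M[R]_n) :
  Smat A -> Smat B -> Smat (A - B).
Proof.
move=> [HA DA] [HB DB]; split.
- by move=> i j h; rewrite !mxE HA // HB // subr0.
- by move=> i j; rewrite !mxE (DA i j) (DB i j).
Qed.

Lemma Smat_scalar (R : pzRingType) n (e : R) : Smat (e%:M : 'M[R]_n).
Proof.
split.
- move=> i j h; rewrite !mxE; case: eqP => // E.
  by move: h; rewrite E ltnn.
- by move=> i j; rewrite !mxE !eqxx.
Qed.

Lemma Smat_add (R : pzRingType) n (A B : 'M[R]_n) :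
  Smat A -> Smat B -> Smat (A + B).
Proof.
move=> SA SB; rewrite -(opprK B); apply: Smat_sub => //.
case: SB => [HB DB]; split.
- by move=> i j h; rewrite !mxE HB // oppr0.
- by move=> i j; rewrite !mxE (DB i j).
Qed.

Theorem mainTheorem4 (R : pzRingType) (I : R -> Prop) (n : nat) (hn : (0 < n)%N) :
  idem_central R -> is_ideal I -> weakly_clean I ->
  [/\ is_ideal_of_S (Iprime I (Ordinal hn)),
      (forall A : 'M[R]_n, idemS A <-> exists e : R, idem e /\ A = e%:M) &
      weakly_clean_S (Iprime I (Ordinal hn))].
Proof.
set i0 := Ordinal hn.
move=> Hc [I0 Isub Il Ir] Hw; split.
- split.
  + by move=> A [].
  + split; last by rewrite mxE.
    by split=> [i j _|i j]; rewrite !mxE.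
  + move=> A B [SA IA] [SB IB]; split; first exact: Smat_sub.
    by rewrite !mxE; apply: Isub.
  + move=> X A SX [SA IA]; split; first exact: Smat_mul.
    case: SX => HX DX; case: SA => HA DA.
    by rewrite diag_mul //; apply: Il.
  + move=> X A SX [SA IA]; split; first exact: Smat_mul.
    case: SX => HX DX; case: SA => HA DA.
    by rewrite diag_mul //; apply: Ir.
- move=> A; split.
  + move=> [[HA DA] AA].
    set e := A i0 i0.
    have ee : e * e = e.
      by rewrite /e -diag_mul // AA.
    exists e; split => //.
    have key : forall d (i j : 'I_n), (j - i = d)%N -> (i < j)%N -> A i j = 0.
      elim/ltn_ind => d IH i j hd hij.
      have E : A i j = e * A i j + A i j * e.
        rewrite -{1}AA mxE (bigD1 i) //= (bigD1 j) /=; last first.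
          by rewrite neq_ltn hij orbT.
        rewrite big1 ?addr0; first by rewrite /e (DA i i0) (DA j i0).
        move=> k /andP [hki hkj].
        case: (ltnP k i) => h1; first by rewrite (HA i k h1) mul0r.
        case: (ltnP j k) => h2; first by rewrite (HA k j h2) mulr0.
        have h1' : (i < k)%N by rewrite ltn_neqAle h1 andbT eq_sym.
        rewrite (IH (k - i)%N _ i k erefl h1') ?mul0r //.
        rewrite -hd; apply: ltn_sub2r => //.
        by rewrite ltn_neqAle h2 andbT.
      have E2 : A i j = e * A i j + e * A i j by rewrite {1}E -(Hc e ee (A i j)).
      have E3 : e * A i j = e * A i j + e * A i j.
        by rewrite {1}E2 mulrDr !mulrA ee.
      have z : e * A i j = 0.
        by apply/eqP; rewrite -(addrI _ (esym (etrans (addr0 _) E3))) //.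
      by rewrite E2 z addr0.
    apply/matrixP => i j; rewrite mxE.
    case: (ltngtP i j) => h.
    + by rewrite (key _ i j erefl h); case: eqP => // E; move: h; rewrite E ltnn.
    + by rewrite (HA i j h); case: eqP => // E; move: h; rewrite E ltnn.
    + by rewrite (ord_inj h) eqxx /e (DA j i0).
  + move=> [e [ee ->]]; split; first exact: Smat_scalar.
    by rewrite mul_scalar_mx scale_scalar_mx ee.
- move=> X SX.
  have [e [ee He]] := Hw (X i0 i0).
  exists e%:M; split.
    by split; [exact: Smat_scalar | rewrite mul_scalar_mx scale_scalar_mx ee].
  case: He => H; [left | right]; split.
  + by apply: Smat_sub => //; apply: Smat_scalar.
  + by rewrite !mxE eqxx.
  + by apply: Smat_add => //; apply: Smat_scalar.
  + by rewrite !mxE eqxx.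
Qed.
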